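(* Let $T$ be a finite rooted tree in which every inner node has at least two children, with node set $V$ and leaf set $L$. Let $S\subseteq V\setminus L$ and let $(\pi,\sigma)$ be a pair of injective maps $S\to L$ identifying $S$ with unique request, and put $A=\pi(S)$, $B=\sigma(S)$. Then for each inner node $x$ exactly one of the following three cases holds: (1) $x\notin S$, $x$ is not requested in $(\pi,\sigma)$, and for each child $c$ of $x$, $|A\cap V(T_c)|=|B\cap V(T_c)|$; (2) $x\notin S$, $x$ is requested in $(\pi,\sigma)$, and there is a leaf $z\in(A\cup B)\cap V(T_x)$ such that for each child $c$ of $x$, $|(A\setminus\{z\})\cap V(T_c)|=|(B\setminus\{z\})\cap V(T_c)|$; (3) $x\in S$, $x$ is requested in $(\pi,\sigma)$, and there are leaves $a\in A\cap V(T_x)$ and $b\in B\cap V(T_x)$ such that for each child $c$ of $x$, $|(A\setminus\{a\})\cap V(T_c)|=|(B\setminus\{b\})\cap V(T_c)|$ and $\{a,b\}\not\subseteq V(T_c)$. In particular, $x\in S$ if and only if there exist $a\in A\cap V(T_x)$ and $b\in B\cap V(T_x)$ such that for each child $c$ of $x$, $|(A\setminus\{a\})\cap V(T_c)|=|(B\setminus\{b\})\cap V(T_c)|$ and $\{a,b\}\not\subseteq V(T_c)$.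
   Context: Every node is its own ancestor and descendant; $T_x$ is the subtree rooted at $x$ and $V(T_x)$ the set of descendants of $x$. A pair $(\pi,\sigma)$ of injective maps from $S\subseteq V\setminus L$ to $L$ identifies $S$ if for each $s\in S$, $s$ is the least common ancestor of $\pi(s)$ and $\sigma(s)$. For $s\in S$, a node $x$ is $s$-requested in $(\pi,\sigma)$ if $x$ lies on the path of $T$ from $\pi(s)$ to $\sigma(s)$; it is requested if it is $s$-requested for some $s\in S$. The pair has unique request if every node is $s$-requested for at most one $s\in S$. *)

(* Defs.v *)
From mathcomp Require Import all_boot.
Set Implicit Arguments. Unset Strict Implicit. Unset Printing Implicit Defensive.

(* A finite rooted tree: nodes form the finType [V]; [parent] maps each
   non-root node to its parent, and [parent root = root].  Every node
   reaches the root by iterating [parent]. *)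
Section Tree.
Variables (V : finType) (root : V) (parent : V -> V).

Definition is_rooted_tree : Prop :=
  parent root = root /\ forall x : V, fconnect parent x root.

(* [desc y x] : y is a descendant of x (every node is its own descendant). *)
Definition desc (y x : V) : bool := fconnect parent y x.

Definition subtree (x : V) : {set V} := [set y | desc y x].

Definition children (x : V) : {set V} :=
  [set c | (c != root) && (parent c == x)].

Definition is_leaf (x : V) : bool := children x == set0.
Definition leaves : {set V} := [set x | is_leaf x].

Definition inner_branching : Prop :=
  forall x : V, ~~ is_leaf x -> 1 < #|children x|.

Definition is_lca (w u v : V) : bool :=
  [&& desc u w, desc v w & [forall y, (desc u y && desc v y) ==> desc w y]].

(* z lies on the tree path from u to v *)
Definition on_path (z u v : V) : bool :=
  (desc u z || desc v z) && [forall y, (desc u y && desc v y) ==> desc z y].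

Definition identifies (S : {set V}) (pi sigma : V -> V) : Prop :=
  forall s, s \in S -> is_lca s (pi s) (sigma s).

Definition s_requested (S : {set V}) (pi sigma : V -> V) (s x : V) : Prop :=
  s \in S /\ on_path x (pi s) (sigma s).

Definition requested (S : {set V}) (pi sigma : V -> V) (x : V) : Prop :=
  exists s, s_requested S pi sigma s x.

Definition unique_request (S : {set V}) (pi sigma : V -> V) : Prop :=
  forall x s1 s2, s_requested S pi sigma s1 x -> s_requested S pi sigma s2 x ->
    s1 = s2.

End Tree.

(* Main.v *)
Require Import Defs.
From mathcomp Require Import all_boot.
From Stdlib Require Import Classical.
Set Implicit Arguments. Unset Strict Implicit. Unset Printing Implicit Defensive.

Lemma descP (V : finType) (parent : V -> V) y x :
  reflect (exists n, iter n parent y = x) (desc parent y x).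
Proof.
apply: (iffP idP).
  by move=> H; exists (findex parent y x); exact: iter_findex.
by case=> n <-; exact: fconnect_iter.
Qed.

Lemma iter_fix (V : Type) (f : V -> V) r n : f r = r -> iter n f r = r.
Proof. by move=> H; elim: n => //= n ->. Qed.

Lemma fix_root (V : finType) (root : V) (parent : V -> V)
  (Ht : is_rooted_tree root parent) y : parent y = y -> y = root.
Proof.
move=> Hy; case: Ht => _ /(_ y) /descP [n <-]; by rewrite iter_fix.
Qed.

Lemma desc_antisym (V : finType) (root : V) (parent : V -> V)
  (Ht : is_rooted_tree root parent) u v :
  desc parent u v -> desc parent v u -> u = v.
Proof.
move=> /descP [n Hn] /descP [m Hm].
have Hu : iter (m + n) parent u = u by rewrite iterD Hn.
case: n Hn Hu => [|n] Hn Hu; first by [].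
have Hk : forall t, iter ((m + n.+1) * t) parent u = u.
  elim=> [|t IH]; first by rewrite muln0.
  by rewrite mulnS iterD IH Hu.
case: Ht => Hr /(_ u) /descP [j Hj].
have Hur : u = root.
  rewrite -(Hk j).
  have -> : (m + n.+1) * j = ((m + n.+1) * j - j) + j.
    by rewrite subnK // leq_pmull // addnS.
  by rewrite iterD Hj iter_fix.
by rewrite -Hn Hur iter_fix.
Qed.

Lemma desc_cmp (V : finType) (parent : V -> V) u y c :
  desc parent u y -> desc parent u c -> desc parent y c || desc parent c y.
Proof.
move=> /descP [n <-] /descP [m <-].
case: (leqP n m) => H.
  by rewrite /desc -(subnK H) iterD fconnect_iter.
by rewrite /desc -(subnK (ltnW H)) iterD fconnect_iter orbT.
Qed.

Lemma desc_step (V : finType) (parent : V -> V) c y :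
  desc parent c y -> c != y -> desc parent (parent c) y.
Proof.
move=> /descP [[|n] <-]; first by rewrite eqxx.
by rewrite /desc iterSr fconnect_iter.
Qed.

Lemma desc_trans (V : finType) (parent : V -> V) u v w :
  desc parent u v -> desc parent v w -> desc parent u w.
Proof. exact: connect_trans. Qed.

Lemma desc_refl (V : finType) (parent : V -> V) u : desc parent u u.
Proof. exact: connect0. Qed.

Lemma childE (V : finType) (root : V) (parent : V -> V) x c :
  (c \in children root parent x) = (c != root) && (parent c == x).
Proof. by rewrite inE. Qed.

Lemma child_desc (V : finType) (root : V) (parent : V -> V) x c :
  c \in children root parent x -> desc parent c x.
Proof. by rewrite childE => /andP [_ /eqP <-]; exact: fconnect1. Qed.

Lemma child_not_anc (V : finType) (root : V) (parent : V -> V)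
  (Ht : is_rooted_tree root parent) x c :
  c \in children root parent x -> ~~ desc parent x c.
Proof.
move=> Hc; apply/negP => Hxc.
have E := desc_antisym Ht (child_desc Hc) Hxc.
move: Hc; rewrite childE E => /andP [Hn /eqP Hp].
by rewrite (fix_root Ht Hp) eqxx in Hn.
Qed.

Lemma child_disj (V : finType) (root : V) (parent : V -> V)
  (Ht : is_rooted_tree root parent) x c1 c2 u :
  c1 \in children root parent x -> c2 \in children root parent x ->
  desc parent u c1 -> desc parent u c2 -> c1 = c2.
Proof.
move=> H1 H2 D1 D2.
wlog: c1 c2 H1 H2 D1 D2 / desc parent c1 c2.
  move=> W; case/orP: (desc_cmp D1 D2) => H; first exact: W.
  by apply/esym; apply: W.
move=> D12; case: (eqVneq c1 c2) => // Hne.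
have := desc_step D12 Hne; move: (H1); rewrite childE => /andP [_ /eqP ->].
by move=> Hx; move: (child_not_anc Ht H2); rewrite Hx.
Qed.

Lemma child_exists (V : finType) (root : V) (parent : V -> V)
  (Ht : is_rooted_tree root parent) u x :
  desc parent u x -> u != x -> exists2 c, c \in children root parent x & desc parent u c.
Proof.
move=> /descP [n Hn]; elim: n {-2}n (leqnn n) Hn => [|N IH] n Hle Hn Hne.
  by move: Hle; rewrite leqn0 => /eqP E; subst n; rewrite -Hn eqxx in Hne.
case: n Hle Hn => [|n] Hle Hn; first by rewrite -Hn eqxx in Hne.
case: (eqVneq (iter n parent u) root) => Hr.
  apply: (IH n) => //.
  by rewrite -Hn /= Hr; case: Ht => ->.
exists (iter n parent u); last exact: fconnect_iter.
by rewrite childE Hr -Hn eqxx.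
Qed.

Lemma cross (V : finType) (root : V) (parent : V -> V)
  (Ht : is_rooted_tree root parent) x c u v :
  c \in children root parent x -> desc parent u c -> ~~ desc parent v c ->
  on_path parent x u v.
Proof.
move=> Hc Du Nv; rewrite /on_path (desc_trans Du (child_desc Hc)) /=.
apply/forallP => y; apply/implyP => /andP [Duy Dvy].
case/orP: (desc_cmp Duy Du) => H.
  by rewrite (desc_trans Dvy H) in Nv.
case: (eqVneq c y) => E; first by subst y; rewrite Dvy in Nv.
by move: (desc_step H E); move: Hc; rewrite childE => /andP [_ /eqP ->].
Qed.

Lemma on_path_sym (V : finType) (parent : V -> V) z u v :
  on_path parent z u v = on_path parent z v u.
Proof.
rewrite /on_path orbC; congr (_ && _); apply: eq_forallb => y.
by rewrite andbC.
Qed.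

Lemma on_path_self (V : finType) (parent : V -> V) u v : on_path parent u u v.
Proof.
rewrite /on_path desc_refl /=; apply/forallP => y; apply/implyP.
by case/andP.
Qed.

Lemma subtreeE (V : finType) (parent : V -> V) c y :
  (y \in subtree parent c) = desc parent y c.
Proof. by rewrite inE. Qed.

Lemma card_imI (V : finType) (f : V -> V) (P X : {set V}) :
  {in P &, injective f} -> #|(f @: P) :&: X| = #|[set s in P | f s \in X]|.
Proof.
move=> Hi.
have -> : (f @: P) :&: X = f @: [set s in P | f s \in X].
  apply/setP => y; rewrite inE; apply/andP/imsetP.
    by case=> /imsetP [s Hs ->] HX; exists s => //; rewrite inE Hs.
  by case=> s; rewrite inE => /andP [Hs HX] ->; split => //; apply: imset_f.
rewrite card_in_imset //.
by move=> s1 s2; rewrite !inE => /andP [H1 _] /andP [H2 _]; apply: Hi.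
Qed.

Lemma cnt (V : finType) (pi sigma : V -> V) (P Q X : {set V}) :
  {in P &, injective pi} -> {in Q &, injective sigma} ->
  [set s in P | pi s \in X] = [set s in Q | sigma s \in X] ->
  #|(pi @: P) :&: X| = #|(sigma @: Q) :&: X|.
Proof. by move=> H1 H2 E; rewrite !card_imI // E. Qed.

Lemma imsetD1_in (V : finType) (f : V -> V) (S : {set V}) s :
  {in S &, injective f} -> s \in S -> (f @: S) :\ f s = f @: (S :\ s).
Proof.
move=> Hi Hs; apply/setP => y; rewrite !inE; apply/andP/imsetP.
  case=> Hy /imsetP [t Ht E]; exists t => //; rewrite !inE Ht andbT.
  by apply/eqP => Ets; rewrite E Ets eqxx in Hy.
case=> t; rewrite !inE => /andP [Hts Ht] ->; split; last exact: imset_f.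
by apply/eqP => /Hi E; rewrite E // eqxx in Hts.
Qed.

Lemma injD1 (V : finType) (f : V -> V) (S : {set V}) s :
  {in S &, injective f} -> {in S :\ s &, injective f}.
Proof. by move=> Hi a b; rewrite !inE => /andP [_ Ha] /andP [_ Hb]; apply: Hi. Qed.

Lemma disjAB (V : finType) (root : V) (parent : V -> V)
  (Htree : is_rooted_tree root parent)
  (S : {set V}) (pi sigma : V -> V)
  (HS : forall s, s \in S -> ~~ is_leaf root parent s)
  (Hpi_leaf : forall s, s \in S -> is_leaf root parent (pi s))
  (Hid : identifies parent S pi sigma)
  (Huniq : unique_request parent S pi sigma) s1 s2 :
  s1 \in S -> s2 \in S -> pi s1 != sigma s2.
Proof.
move=> H1 H2; apply/eqP => E.
have E12 : s1 = s2.
  apply: (Huniq (pi s1)); split => //; first exact: on_path_self.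
  by rewrite E on_path_sym on_path_self.
subst s2.
have /and3P [D1 _ /forallP /(_ (pi s1))] := Hid s1 H1.
rewrite -E desc_refl /= => D2.
have Es := desc_antisym Htree D1 D2.
by move: (HS s1 H1); rewrite -Es Hpi_leaf.
Qed.

Lemma lca_split (V : finType) (root : V) (parent : V -> V)
  (Htree : is_rooted_tree root parent) s u v x c1 c2 :
  is_lca parent s u v -> c1 \in children root parent x -> c2 \in children root parent x ->
  c1 != c2 -> desc parent u c1 -> desc parent v c2 -> s = x.
Proof.
move=> /and3P [Du Dv /forallP Hall] H1 H2 Hne D1 D2.
have Dsx : desc parent s x.
  apply: (implyP (Hall x)); rewrite (desc_trans D1 (child_desc H1)).
  by rewrite (desc_trans D2 (child_desc H2)).
case: (eqVneq s x) => // Hsx.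
have [c Hc Dsc] := child_exists Htree Dsx Hsx.
have E1 := child_disj Htree Hc H1 (desc_trans Du Dsc) D1.
have E2 := child_disj Htree Hc H2 (desc_trans Dv Dsc) D2.
by rewrite -E1 -E2 eqxx in Hne.
Qed.

Lemma setD1I_notin (V : finType) (B X : {set V}) y :
  y \notin X -> (B :\ y) :&: X = B :&: X.
Proof.
move=> Hy; apply/setP => z; rewrite !inE; case: eqVneq => //= ->.
by rewrite (negbTE Hy) andbF.
Qed.

Lemma card_setD1I (V : finType) (A X : {set V}) a :
  a \in A -> a \in X -> #|A :&: X| = #|(A :\ a) :&: X|.+1.
Proof.
move=> Ha HX; rewrite (cardsD1 a (A :&: X)) inE Ha HX add1n; congr (_.+1).
by apply: eq_card => y; rewrite !inE andbA.
Qed.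

Theorem lemma3p5 (V : finType) (root : V) (parent : V -> V)
  (Htree : is_rooted_tree root parent)
  (Hbranch : inner_branching root parent)
  (S : {set V}) (pi sigma : V -> V)
  (HS : forall s, s \in S -> ~~ is_leaf root parent s)
  (Hpi_inj : {in S &, injective pi}) (Hsigma_inj : {in S &, injective sigma})
  (Hpi_leaf : forall s, s \in S -> is_leaf root parent (pi s))
  (Hsigma_leaf : forall s, s \in S -> is_leaf root parent (sigma s))
  (Hid : identifies parent S pi sigma)
  (Huniq : unique_request parent S pi sigma) :
  let A := pi @: S in
  let B := sigma @: S in
  forall x : V, ~~ is_leaf root parent x ->
  let C1 :=
    [/\ x \notin S, ~ requested parent S pi sigma x &
        forall c, c \in children root parent x ->
          #|A :&: subtree parent c| = #|B :&: subtree parent c| ] in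
  let C2 :=
    [/\ x \notin S, requested parent S pi sigma x &
        exists2 z, (z \in leaves root parent) /\ (z \in (A :|: B) :&: subtree parent x) &
          forall c, c \in children root parent x ->
            #|(A :\ z) :&: subtree parent c| = #|(B :\ z) :&: subtree parent c| ] in
  let C3 :=
    [/\ x \in S, requested parent S pi sigma x &
        exists a b, [/\ a \in leaves root parent, b \in leaves root parent,
          a \in A :&: subtree parent x, b \in B :&: subtree parent x &
          forall c, c \in children root parent x ->
            #|(A :\ a) :&: subtree parent c| = #|(B :\ b) :&: subtree parent c|
            /\ ~~ ((a \in subtree parent c) && (b \in subtree parent c))]] in
  [/\ C1 \/ C2 \/ C3, ~ (C1 /\ C2), ~ (C1 /\ C3) & ~ (C2 /\ C3)] /\
  (x \in S <->
     exists a b, [/\ a \in A :&: subtree parent x, b \in B :&: subtree parent x &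
          forall c, c \in children root parent x ->
            #|(A :\ a) :&: subtree parent c| = #|(B :\ b) :&: subtree parent c|
            /\ ~~ ((a \in subtree parent c) && (b \in subtree parent c))]).
Proof.
move=> A B x Hx C1 C2 C3.
have Hdisj := disjAB Htree HS Hpi_leaf Hid Huniq.
have Hcross : forall s c, s \in S -> c \in children root parent x ->
    desc parent (pi s) c != desc parent (sigma s) c -> s_requested parent S pi sigma s x.
  move=> s c Hs Hc; case Dp: (desc _ (pi s) c); case Dq: (desc _ (sigma s) c) => //= _;
    split => //.
    exact: (cross Htree Hc Dp (negbT Dq)).
  rewrite on_path_sym; exact: (cross Htree Hc Dq (negbT Dp)).
have Hself : x \in S -> s_requested parent S pi sigma x x.
  move=> HxS; split=> //; have /and3P [D1 D2 Hall] := Hid x HxS.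
  by rewrite /on_path D1.
have L3 : x \in S -> exists a b, [/\ a \in leaves root parent, b \in leaves root parent,
          a \in (pi @: S) :&: subtree parent x, b \in (sigma @: S) :&: subtree parent x &
          forall c, c \in children root parent x ->
            #|((pi @: S) :\ a) :&: subtree parent c| = #|((sigma @: S) :\ b) :&: subtree parent c|
            /\ ~~ ((a \in subtree parent c) && (b \in subtree parent c))].
  move=> HxS; have /and3P [D1 D2 /forallP Hall] := Hid x HxS.
  exists (pi x), (sigma x); split.
  - by rewrite inE Hpi_leaf.
  - by rewrite inE Hsigma_leaf.
  - by rewrite inE subtreeE D1 andbT (imset_f pi HxS).
  - by rewrite inE subtreeE D2 andbT (imset_f sigma HxS).
  move=> c Hc; split.
    rewrite !imsetD1_in //; apply: cnt; try exact: injD1.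
    apply/setP => s; rewrite !inE; case Hs: (s \in S); rewrite ?andbF ?andbT //=.
    case: (eqVneq s x) => //= Hsx.
    apply/idP/idP => H; apply/negPn/negP => N.
      have E : s = x.
        apply: (Huniq x s x _ (Hself HxS)); apply: (Hcross s c Hs Hc).
        by rewrite H (negbTE N).
      by rewrite E eqxx in Hsx.
    have E : s = x.
      apply: (Huniq x s x _ (Hself HxS)); apply: (Hcross s c Hs Hc).
      by rewrite H (negbTE N).
    by rewrite E eqxx in Hsx.
  rewrite !subtreeE; apply/negP => /andP [Da Db].
  have := Hall c; rewrite Da Db /= => Dxc.
  by move: (child_not_anc Htree Hc); rewrite Dxc.
have L1 : ~ requested parent S pi sigma x -> forall c, c \in children root parent x ->
          #|(pi @: S) :&: subtree parent c| = #|(sigma @: S) :&: subtree parent c|.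
  move=> Hn c Hc; apply: cnt => //.
  apply/setP => s; rewrite !inE; case Hs: (s \in S) => //=.
  apply/idP/idP => H; apply/negPn/negP => N; apply: Hn; exists s;
    apply: (Hcross s c Hs Hc); by rewrite H (negbTE N).
have L2 : requested parent S pi sigma x -> x \notin S ->
    exists2 z, (z \in leaves root parent) /\ (z \in ((pi @: S) :|: (sigma @: S)) :&: subtree parent x) &
          forall c, c \in children root parent x ->
            #|((pi @: S) :\ z) :&: subtree parent c| = #|((sigma @: S) :\ z) :&: subtree parent c|.
  move=> [s [Hs Hp]] HxS; have Hp' := Hp.
  have Hsx : s != x by apply: contraNneq HxS => <-.
  have /and3P [D1 D2 /forallP Hall] := Hid s Hs.
  move: Hp => /andP [Hor /forallP Hall2].
  have Nboth : ~~ (desc parent (pi s) x && desc parent (sigma s) x).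
    apply/negP => Hb; have Dsx := implyP (Hall x) Hb.
    have Dxs : desc parent x s by apply: (implyP (Hall2 s)); rewrite D1 D2.
    by rewrite (desc_antisym Htree Dsx Dxs) eqxx in Hsx.
  case/orP: Hor => Dz.
  - have Ns : ~~ desc parent (sigma s) x by move: Nboth; rewrite Dz.
    exists (pi s).
      by split; [rewrite inE Hpi_leaf | rewrite !inE Dz andbT (imset_f pi Hs)].
    move=> c Hc.
    have -> : ((sigma @: S) :\ pi s) = sigma @: S.
      apply/setP => y; rewrite !inE; case: eqVneq => //= ->.
      apply/esym/negbTE/imsetP => -[t Ht E].
      by move: (Hdisj s t Hs Ht); rewrite E eqxx.
    rewrite imsetD1_in //; apply: cnt; [exact: injD1 | done | ].
    apply/setP => t; rewrite !inE.
    case Ht: (t \in S); rewrite ?andbF ?andbT //=.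
    case: (eqVneq t s) => [->|Hts] /=.
      apply/esym/negbTE; apply: contra Ns => D; exact: desc_trans D (child_desc Hc).
    apply/idP/idP => H; apply/negPn/negP => N.
      have E : t = s.
        apply: (Huniq x t s _ (conj Hs Hp')); apply: (Hcross t c Ht Hc).
        by rewrite H (negbTE N).
      by rewrite E eqxx in Hts.
    have E : t = s.
      apply: (Huniq x t s _ (conj Hs Hp')); apply: (Hcross t c Ht Hc).
      by rewrite H (negbTE N).
    by rewrite E eqxx in Hts.
  - have Ns : ~~ desc parent (pi s) x by move: Nboth; rewrite Dz andbT.
    exists (sigma s).
      by split; [rewrite inE Hsigma_leaf | rewrite !inE Dz andbT (imset_f sigma Hs) orbT].
    move=> c Hc.
    have -> : ((pi @: S) :\ sigma s) = pi @: S.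
      apply/setP => y; rewrite !inE; case: eqVneq => //= ->.
      apply/esym/negbTE/imsetP => -[t Ht E].
      by move: (Hdisj t s Ht Hs); rewrite -E eqxx.
    rewrite imsetD1_in //; apply: cnt; [done | exact: injD1 | ].
    apply/setP => t; rewrite !inE.
    case Ht: (t \in S); rewrite ?andbF ?andbT //=.
    case: (eqVneq t s) => [->|Hts] /=.
      apply/negbTE; apply: contra Ns => D; exact: desc_trans D (child_desc Hc).
    apply/idP/idP => H; apply/negPn/negP => N.
      have E : t = s.
        apply: (Huniq x t s _ (conj Hs Hp')); apply: (Hcross t c Ht Hc).
        by rewrite H (negbTE N).
      by rewrite E eqxx in Hts.
    have E : t = s.
      apply: (Huniq x t s _ (conj Hs Hp')); apply: (Hcross t c Ht Hc).
      by rewrite H (negbTE N).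
    by rewrite E eqxx in Hts.
have Ex : forall c, c \in children root parent x ->
    #|(pi @: S) :&: subtree parent c| != #|(sigma @: S) :&: subtree parent c| ->
    exists2 t, t \in S & desc parent (pi t) c != desc parent (sigma t) c.
  move=> c Hc Hne'.
  case: (boolP [exists t, (t \in S) && (desc parent (pi t) c != desc parent (sigma t) c)])
    => [/existsP [t /andP [Ht H]]|/existsPn Hn]; first by exists t.
  exfalso; move/eqP: Hne'; apply; apply: cnt => //; apply/setP => t; rewrite !inE.
  by have := Hn t; case: (t \in S) => //= /negbNE/eqP.
have L4 : (exists a b, [/\ a \in (pi @: S) :&: subtree parent x, b \in (sigma @: S) :&: subtree parent x &
          forall c, c \in children root parent x ->
            #|((pi @: S) :\ a) :&: subtree parent c| = #|((sigma @: S) :\ b) :&: subtree parent c|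
            /\ ~~ ((a \in subtree parent c) && (b \in subtree parent c))]) -> x \in S.
  case=> a [b [Ha Hb Hall]].
  have HaA : a \in pi @: S by move: Ha; rewrite inE => /andP [].
  have HbB : b \in sigma @: S by move: Hb; rewrite inE => /andP [].
  move: Ha; rewrite !inE => /andP [/imsetP [s1 Hs1 Ea] Da].
  move: Hb; rewrite !inE => /andP [/imsetP [s2 Hs2 Eb] Db].
  have Hax : a != x by apply: contraNneq Hx => <-; rewrite Ea; exact: Hpi_leaf.
  have Hbx : b != x by apply: contraNneq Hx => <-; rewrite Eb; exact: Hsigma_leaf.
  have [ca Hca Daca] := child_exists Htree Da Hax.
  have [cb Hcb Dbcb] := child_exists Htree Db Hbx.
  have [E1 N1] := Hall ca Hca.
  have [E2 N2] := Hall cb Hcb.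
  have Nb : ~~ desc parent b ca by move: N1; rewrite !subtreeE Daca.
  have Na : ~~ desc parent a cb by move: N2; rewrite !subtreeE Dbcb andbT.
  have Hne : ca != cb by apply: contraNneq Nb => ->.
  have [t1 Ht1 X1] : exists2 t, t \in S & desc parent (pi t) ca != desc parent (sigma t) ca.
    apply: Ex => //.
    rewrite (card_setD1I HaA (_ : a \in subtree parent ca)) ?subtreeE //.
    rewrite -(setD1I_notin (sigma @: S) (_ : b \notin subtree parent ca)) ?subtreeE //.
    by rewrite E1 -{2}[#|_|]addn0 -addn1 eqn_add2l.
  have [t2 Ht2 X2] : exists2 t, t \in S & desc parent (pi t) cb != desc parent (sigma t) cb.
    apply: Ex => //.
    rewrite (card_setD1I HbB (_ : b \in subtree parent cb)) ?subtreeE //.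
    rewrite -(setD1I_notin (pi @: S) (_ : a \notin subtree parent cb)) ?subtreeE //.
    by rewrite -E2 -{1}[#|_|]addn0 -addn1 eqn_add2l.
  have E12 : t1 = t2 by apply: (Huniq x); [exact: (Hcross t1 ca) | exact: (Hcross t2 cb)].
  subst t2.
  case Pa: (desc parent (pi t1) ca); case Pb: (desc parent (pi t1) cb).
  - by rewrite (child_disj Htree Hca Hcb Pa Pb) eqxx in Hne.
  - have Sb : desc parent (sigma t1) cb by move: X2; rewrite Pb; case: (desc _ _ _).
    by rewrite -(lca_split Htree (Hid t1 Ht1) Hca Hcb Hne Pa Sb).
  - have Sa : desc parent (sigma t1) ca by move: X1; rewrite Pa; case: (desc _ _ _).
    by rewrite -(lca_split Htree (Hid t1 Ht1) Hcb Hca (_ : cb != ca) Pb Sa) // eq_sym.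
  - have Sa : desc parent (sigma t1) ca by move: X1; rewrite Pa; case: (desc _ _ _).
    have Sb : desc parent (sigma t1) cb by move: X2; rewrite Pb; case: (desc _ _ _).
    by rewrite (child_disj Htree Hca Hcb Sa Sb) eqxx in Hne.
rewrite /C1 /C2 /C3 /A /B.
split; last first.
  split; last exact: L4.
  by move=> HxS; have [a [b [_ _ Ha Hb Hc]]] := L3 HxS; exists a, b.
split.
- case: (boolP (x \in S)) => HxS.
    by right; right; split => //; [exists x; exact: Hself HxS | exact: L3 HxS].
  case: (classic (requested parent S pi sigma x)) => Hr.
    by right; left; split => //; exact: L2.
  by left; split => //; exact: L1.
- by case=> [[_ Hn _] [_ Hr _]].
- by case=> [[Hn _ _] [Hs _ _]]; rewrite Hs in Hn.
- by case=> [[Hn _ _] [Hs _ _]]; rewrite Hs in Hn.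
Qed.
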